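(* Let $G$ be a group, $\nu$ a conjugation-invariant pseudo-norm on $G$, and $H,K$ subgroups of $G$ such that $(G,H)$ satisfies the property $\mathsf{FM}$. Then for any $g\in G$ and any $f\in K$, \[ \nu([g,f])\le 4E_{H,\nu}(K), \] where $[g,f]=gfg^{-1}f^{-1}$.
   Context: A conjugation-invariant pseudo-norm on a group $G$ is a function $\nu\colon G\to\mathbb{R}_{\ge0}$ with $\nu(1)=0$, $\nu(f)=\nu(f^{-1})$, $\nu(fg)\le\nu(f)+\nu(g)$ and $\nu(gfg^{-1})=\nu(f)$ for all $f,g\in G$. For a subgroup $H\le G$, $\nu_H(f)$ is the minimal $k$ such that $f=g_1h_1g_1^{-1}\cdots g_kh_kg_k^{-1}$ ($g_i\in G,h_i\in H$), $\infty$ if none. For $K\subset G$, $\mathrm{D}^f_H(K)$ is the set of $h_0\in G$ such that for all $g_1,\dots,g_k\in G$ there is $h\in G$ with every element of $hh_0h^{-1}K(hh_0h^{-1})^{-1}$ commuting with every element of $g_1Hg_1^{-1}\cup\dots\cup g_kHg_k^{-1}$; $E_{H,\nu}(K)=\inf_{h_0\in\mathrm{D}^f_H(K)}\nu(h_0)$ (infimum of the empty set being $+\infty$). $(G,H)$ satisfies $\mathsf{FM}$ if $\nu_H<\infty$ on $G$ and $\mathrm{D}^f_H(h_1Hh_1^{-1}\cup\dots\cup h_kHh_k^{-1})\ne\emptyset$ for all $h_1,\dots,h_k\in G$. *)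

(* Defs.v *)
From Stdlib Require Import Reals List.
From Coquelicot Require Import Rbar Lub.
Open Scope R_scope.

Record Group := {
  carrier :> Type;
  gmul : carrier -> carrier -> carrier;
  gone : carrier;
  ginv : carrier -> carrier;
  gmulA : forall x y z, gmul x (gmul y z) = gmul (gmul x y) z;
  gmul1l : forall x, gmul gone x = x;
  gmulVl : forall x, gmul (ginv x) x = gone
}.

Arguments gmul {g} _ _.
Arguments gone {g}.
Arguments ginv {g} _.

Definition conjg {G : Group} (g f : G) : G := gmul (gmul g f) (ginv g).

Definition commg {G : Group} (g f : G) : G :=
  gmul (gmul (gmul g f) (ginv g)) (ginv f).

Definition is_subgroup {G : Group} (H : G -> Prop) : Prop :=
  H gone /\ (forall x y, H x -> H y -> H (gmul x y)) /\ (forall x, H x -> H (ginv x)).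

Definition is_ci_pseudonorm {G : Group} (nu : G -> R) : Prop :=
  (forall f, 0 <= nu f) /\
  nu gone = 0 /\
  (forall f, nu f = nu (ginv f)) /\
  (forall f g, nu (gmul f g) <= nu f + nu g) /\
  (forall f g, nu (conjg g f) = nu f).

Definition conj_prod {G : Group} (l : list (G * G)) : G :=
  fold_right (fun p acc => gmul (conjg (fst p) (snd p)) acc) gone l.

(* nu_H(f) < infinity *)
Definition nuH_finite {G : Group} (H : G -> Prop) (f : G) : Prop :=
  exists l : list (G * G), Forall (fun p => H (snd p)) l /\ f = conj_prod l.

Definition in_conj_union {G : Group} (H : G -> Prop) (gs : list G) (y : G) : Prop :=
  exists g h, In g gs /\ H h /\ y = conjg g h.

Definition Df {G : Group} (H K : G -> Prop) (h0 : G) : Prop :=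
  forall gs : list G, exists h : G,
    forall x y, K x -> in_conj_union H gs y ->
      gmul (conjg (conjg h h0) x) y = gmul y (conjg (conjg h h0) x).

(* E_{H,nu}(K) = inf_{h0 in D^f_H(K)} nu(h0), +oo if empty *)
Definition E_Hnu {G : Group} (H : G -> Prop) (nu : G -> R) (K : G -> Prop) : Rbar :=
  Glb_Rbar (fun r => exists h0, Df H K h0 /\ r = nu h0).

Definition FM {G : Group} (H : G -> Prop) : Prop :=
  (forall f : G, nuH_finite H f) /\
  (forall hs : list G, exists h0, Df H (in_conj_union H hs) h0).

(* Main.v *)
Require Import Defs.
From Stdlib Require Import Reals List Lra.
From Coquelicot Require Import Rbar Lub.

Section GL.
Variable G : Group.
Implicit Types x y z : G.

Lemma mulA' x y z : gmul (gmul x y) z = gmul x (gmul y z).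
Proof. now rewrite gmulA. Qed.

Lemma mulVr x : gmul x (ginv x) = gone.
Proof.
  rewrite <- (gmul1l _ (gmul x (ginv x))).
  rewrite <- (gmulVl _ (ginv x)).
  rewrite mulA', (gmulA _ (ginv x) x), gmulVl, gmul1l, gmulVl. reflexivity.
Qed.

Lemma mul1r x : gmul x gone = x.
Proof. rewrite <- (gmulVl _ x), gmulA, mulVr, gmul1l. reflexivity. Qed.

Lemma canc1 x y : gmul (ginv x) (gmul x y) = y.
Proof. now rewrite gmulA, gmulVl, gmul1l. Qed.

Lemma canc2 x y : gmul x (gmul (ginv x) y) = y.
Proof. now rewrite gmulA, mulVr, gmul1l. Qed.

Lemma invinv x : ginv (ginv x) = x.
Proof. rewrite <- (mul1r (ginv (ginv x))), <- (gmulVl _ x), gmulA, gmulVl, gmul1l. reflexivity. Qed.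

Lemma invM x y : ginv (gmul x y) = gmul (ginv y) (ginv x).
Proof.
  assert (E : gmul (gmul x y) (gmul (ginv y) (ginv x)) = gone).
  { rewrite mulA', canc2, mulVr. reflexivity. }
  rewrite <- (mul1r (ginv (gmul x y))), <- E, canc1. reflexivity.
Qed.

Lemma commute_prod (c : G) (H : G -> Prop) (l : list (G*G)) :
  (forall y, in_conj_union H (map fst l) y -> gmul c y = gmul y c) ->
  Forall (fun p => H (snd p)) l ->
  gmul c (conj_prod l) = gmul (conj_prod l) c.
Proof.
  induction l as [|[a b] l IH]; intros Hc Hl; simpl.
  - now rewrite gmul1l, mul1r.
  - inversion Hl; subst.
    assert (E1 : gmul c (conjg a b) = gmul (conjg a b) c).
    { apply Hc. exists a, b. simpl. auto. }
    assert (E2 : gmul c (conj_prod l) = gmul (conj_prod l) c).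
    { apply IH; auto. intros y [g [h [Hg [Hh ->]]]]. apply Hc.
      exists g, h. simpl. auto. }
    rewrite gmulA, E1, mulA', E2, gmulA. reflexivity.
Qed.
End GL.

Theorem lemma2p6 (G : Group) (nu : G -> R) (H K : G -> Prop)
  (Hnu : is_ci_pseudonorm nu) (HH : is_subgroup H) (HK : is_subgroup K)
  (HFM : FM H) :
  forall g f : G, K f ->
    Rbar_le (Finite (nu (commg g f))) (Rbar_mult (Finite 4) (E_Hnu H nu K)).
Proof.
  intros g f Kf.
  destruct Hnu as [N0 [N1 [NV [NT NC]]]].
  destruct HFM as [FM1 _].
  destruct (FM1 g) as [l [Hl Hg]].
  assert (key : forall h0, Df H K h0 -> nu (commg g f) <= 4 * nu h0).
  { intros h0 D. destruct (D (map fst l)) as [h Hh].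
    set (u := conjg h h0).
    assert (Cm : gmul (conjg u f) g = gmul g (conjg u f)).
    { rewrite Hg. apply (commute_prod G (conjg u f) H l); auto. }
    set (a := conjg g (ginv u)).
    assert (Eq : commg g f =
       gmul (gmul (gmul a (conjg (conjg u f) (ginv a)))
          (conjg (conjg u f) (ginv u))) u).
    { subst a. unfold commg, conjg in *.
      rewrite !invM, !invinv.
      rewrite !mulA' in *.
      rewrite !canc1, !canc2.
      assert (Cm' : forall z, gmul u (gmul f (gmul (ginv u) (gmul g z))) =
                  gmul g (gmul u (gmul f (gmul (ginv u) z)))).
      { intro z. rewrite <- !(mulA' _ _ _ z), Cm. rewrite !mulA'. reflexivity. }
      rewrite gmulVl, mul1r, Cm', !canc1. reflexivity.
    }
    rewrite Eq.
    assert (Hu : nu u = nu h0) by (unfold u; apply NC).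
    assert (Ha : nu a = nu u) by (unfold a; rewrite NC, <- NV; reflexivity).
    pose proof (NT (gmul (gmul a (conjg (conjg u f) (ginv a))) (conjg (conjg u f) (ginv u))) u).
    pose proof (NT (gmul a (conjg (conjg u f) (ginv a))) (conjg (conjg u f) (ginv u))).
    pose proof (NT a (conjg (conjg u f) (ginv a))).
    rewrite NC, <- NV in *. lra. }
  pose proof (Glb_Rbar_correct (fun r => exists h0, Df H K h0 /\ r = nu h0)) as [Hlb Hglb].
  assert (LB : Rbar_le (Finite (nu (commg g f) / 4)) (E_Hnu H nu K)).
  { apply Hglb. intros x [h0 [D ->]]. simpl. specialize (key h0 D). lra. }
  unfold E_Hnu in *.
  destruct (Glb_Rbar _) as [r| |]; simpl in *.
  - lra.
  - unfold Rbar_mult, Rbar_mult'.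
    destruct (Rle_dec 0 4) as [p|p]; [|lra].
    destruct (Rle_lt_or_eq_dec 0 4 p); [exact I|lra].
  - contradiction.
Qed.
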